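(* Let $q$ be a prime power and let $\mathrm{Aff}_q=\mathbb F_q\rtimes\mathbb F_q^*$ act on $\mathbb F_q$ by $(b,a)\circ x=ax+b$. For $c\in\mathbb F_q$ let $H_c=\{((1-a)c,a): a\in\mathbb F_q^*\}$ (the stabilizer of $c$), and let $\mathcal H=\{H_c: c\in\mathbb F_q\}$. Then the (quantum) query complexity of $\mathrm{HSSP}(\mathrm{Aff}_q,\mathbb F_q,\circ,\mathcal H)$ is $\Omega(q^{1/2})$.
   Context: Group actions: a left action $\circ$ of a finite group $G$ on a finite set $M$ is assumed faithful. For $H\le G$, $H\circ m=\{h\circ m:h\in H\}$ is the $H$-orbit of $m$; $H^*$ denotes the partition of $M$ into $H$-orbits. For a partition $\pi=\{\pi_1,\dots,\pi_\ell\}$ of $M$, $\pi^*=\{g\in G:\ g\circ\pi_i=\pi_i\ \forall i\}$. A subgroup $H$ is closed if $H=H^{**}$. The hidden symmetry subgroup problem $\mathrm{HSSP}(G,M,\circ,\mathcal H)$, for a family $\mathcal H$ of closed subgroups of $G$: given oracle access to a function $f:M\to S$ ($S$ a finite set) such that for some $H\in\mathcal H$ we have $f(x)=f(y)\iff H\circ x=H\circ y$ (we say $f$ hides $H$ by symmetries), output $H$. Query complexity counts the number of oracle queries. *)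

(* Defs.v *)
(* Quantum query model over an arbitrary numClosedFieldType C
   (the complex numbers being the intended instance). *)
From HB Require Import structures.
From mathcomp Require Import all_boot all_order all_algebra all_field.
Set Implicit Arguments. Unset Strict Implicit. Unset Printing Implicit Defensive.
Import Order.TTheory GRing.Theory Num.Theory.
Local Open Scope ring_scope.

Definition Aff (F : finFieldType) : {set F * F} := [set p : F * F | p.2 != 0].

Definition aff_act (F : finFieldType) (p : F * F) (x : F) : F := p.2 * x + p.1.

Definition orbit_of (F : finFieldType) (H : {set F * F}) (x : F) : {set F} :=
  [set aff_act p x | p in H].

Definition Hc (F : finFieldType) (c : F) : {set F * F} :=
  [set ((1 - a) * c, a) | a in [set a : F | a != 0]].

Definition hides (F : finFieldType) (S : eqType) (f : F -> S) (H : {set F * F}) : Prop :=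
  forall x y : F, (f x == f y) = (orbit_of H x == orbit_of H y).

(* Basis of the state space: (query input x : F, answer register y : 'I_m,
   workspace z : 'I_w).  Vectors are functions B -> C, operators B -> B -> C. *)
Definition basisT (F : finFieldType) (m w : nat) : finType :=
  (F * 'I_m * 'I_w)%type.

Definition apply_op (C : numClosedFieldType) (B : finType)
    (U : B -> B -> C) (v : B -> C) : B -> C :=
  fun b => \sum_(b' : B) U b b' * v b'.

Definition unitary (C : numClosedFieldType) (B : finType) (U : B -> B -> C) : Prop :=
  forall b1 b2 : B, \sum_(b : B) (U b b1)^* * U b b2 = (b1 == b2)%:R.

Definition ket (C : numClosedFieldType) (B : finType) (b0 : B) : B -> C :=
  fun b => (b == b0)%:R.

(* Standard oracle |x, y, z> |-> |x, y + f(x) mod m, z>, with S = 'I_n.+2. *)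
Definition oracle (C : numClosedFieldType) (F : finFieldType) (n w : nat)
    (f : F -> 'I_n.+2) : basisT F n.+2 w -> basisT F n.+2 w -> C :=
  fun b b' => ((b.1.1 == b'.1.1) && (b.1.2 == b'.1.2 + f b'.1.1) && (b.2 == b'.2))%:R.

(* State after the unitaries U 0, O_f, U 1, O_f, ..., O_f, U k (k queries). *)
Fixpoint run (C : numClosedFieldType) (B : finType) (U : nat -> B -> B -> C)
    (O : B -> B -> C) (b0 : B) (k : nat) : B -> C :=
  match k with
  | 0 => apply_op (U 0%N) (ket C b0)
  | k'.+1 => apply_op (U k) (apply_op O (run U O b0 k'))
  end.

Definition success_prob (C : numClosedFieldType) (F : finFieldType) (n w T : nat)
    (U : nat -> basisT F n.+2 w -> basisT F n.+2 w -> C)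
    (b0 : basisT F n.+2 w) (out : basisT F n.+2 w -> {set F * F})
    (f : F -> 'I_n.+2) (H : {set F * F}) : C :=
  \sum_(b : basisT F n.+2 w | out b == H) `|run U (oracle C f) b0 T b| ^+ 2.

(* Main.v *)
Require Import Defs.
From HB Require Import structures.
From mathcomp Require Import all_boot all_order all_algebra all_field.
From mathcomp Require Import ring zify.
Import Order.TTheory GRing.Theory Num.Theory.
Local Open Scope ring_scope.
Set Implicit Arguments. Unset Strict Implicit. Unset Printing Implicit Defensive.

Section Gen.
Variable C : numClosedFieldType.
Variable B : finType.
Implicit Types (v : B -> C).

Definition nrm (P : pred B) v : C := \sum_(b | P b) `|v b| ^+ 2.

Lemma nrm_ge0 P v : 0 <= nrm P v.
Proof. by apply: sumr_ge0 => b _; rewrite exprn_ge0. Qed.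

Lemma sum_delta (F : B -> C) (b1 : B) : \sum_b2 F b2 * (b2 == b1)%:R = F b1.
Proof.
rewrite (bigD1 b1) //= eqxx mulr1 big1 ?addr0 // => j /negPf ->; exact: mulr0.
Qed.

Lemma unitary_nrm U v : unitary U -> nrm predT (apply_op U v) = nrm predT v.
Proof.
move=> HU; rewrite /nrm /apply_op.
transitivity (\sum_b \sum_b1 \sum_b2 (U b b1 * v b1) * (U b b2 * v b2)^*).
  apply: eq_bigr => b _; rewrite normCK rmorph_sum mulr_suml.
  by apply: eq_bigr => b1 _; rewrite mulr_sumr.
rewrite exchange_big /=.
apply: eq_bigr => b1 _; rewrite exchange_big /=.
transitivity (\sum_b2 (v b1 * (v b2)^*) * (b2 == b1)%:R).
  apply: eq_bigr => b2 _; rewrite -HU mulr_sumr; apply: eq_bigr => b _.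
  rewrite rmorphM /=; ring.
by rewrite sum_delta normCK.
Qed.


Lemma pt_ident (s : nat) (a b : C) :
  s%:R * `|a + b| ^+ 2 + `|a - s%:R * b| ^+ 2 =
  (s.+1)%:R * `|a| ^+ 2 + (s * s.+1)%:R * `|b| ^+ 2.
Proof.
rewrite !normCK rmorphD rmorphB rmorphM /= rmorph_nat natrM -(addn1 s) natrD.
ring.
Qed.

Lemma pt_ineq (s : nat) (a b : C) :
  s%:R * `|a + b| ^+ 2 <= (s.+1)%:R * `|a| ^+ 2 + (s * s.+1)%:R * `|b| ^+ 2.
Proof.
rewrite -pt_ident lerDl; exact: exprn_ge0.
Qed.

Lemma pt_ineq1 (a b : C) :
  `|a + b| ^+ 2 <= 2%:R * `|a| ^+ 2 + 2%:R * `|b| ^+ 2.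
Proof. by have := pt_ineq 1 a b; rewrite mul1r. Qed.


Lemma eq_nrm P (v1 v2 : B -> C) : (forall b, v1 b = v2 b) -> nrm P v1 = nrm P v2.
Proof. by move=> E; apply: eq_bigr => b _; rewrite E. Qed.

Lemma nrm_subset P v : nrm P v <= nrm predT v.
Proof.
rewrite /nrm [X in _ <= X](bigID P) /= lerDl; apply: sumr_ge0 => b _; exact: exprn_ge0.
Qed.

Lemma nrmD_ineq s P (a b : B -> C) :
  s%:R * nrm P (fun x => a x + b x) <= s.+1%:R * nrm P a + (s * s.+1)%:R * nrm P b.
Proof.
rewrite /nrm !mulr_sumr -big_split /=; apply: ler_sum => x _; exact: pt_ineq.
Qed.

Lemma apply_opB U (v1 v2 : B -> C) b :
  apply_op U v1 b - apply_op U v2 b = apply_op U (fun x => v1 x - v2 x) b.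
Proof. by rewrite /apply_op -sumrB; apply: eq_bigr => x _; rewrite mulrBr. Qed.

End Gen.

Section Main.
Variable C : numClosedFieldType.
Variable F : finFieldType.
Variables n w : nat.
Local Notation B := (basisT F n.+2 w).

Definition shift (f : F -> 'I_n.+2) (b : B) : B := (b.1.1, b.1.2 - f b.1.1, b.2).
Definition unshift (f : F -> 'I_n.+2) (b : B) : B := (b.1.1, b.1.2 + f b.1.1, b.2).

Lemma shiftK f : cancel (shift f) (unshift f).
Proof. by case=> [[x y] z]; rewrite /shift /unshift /= subrK. Qed.

Lemma shift_inj f : injective (shift f).
Proof. exact: can_inj (@shiftK f). Qed.

Lemma oracle_apply f (v : B -> C) b : apply_op (oracle C f) v b = v (shift f b).
Proof.
rewrite /apply_op.
transitivity (\sum_b' v b' * (b' == shift f b)%:R); last by rewrite sum_delta.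
apply: eq_bigr => b' _; rewrite mulrC; congr (_ * _%:R).
case: b => [[x y] z]; case: b' => [[x' y'] z']; rewrite /shift /= !xpair_eqE /=.
rewrite [x' == x]eq_sym [z' == z]eq_sym.
case: (eqVneq x x') => [<-|] //=.
by rewrite [y' == _]eq_sym subr_eq.
Qed.

Lemma nrm_shift P f (v : B -> C) : (forall b, P (shift f b) = P b) ->
  nrm P (fun b => v (shift f b)) = nrm P v.
Proof.
move=> HP; rewrite /nrm [RHS](reindex_inj (@shift_inj f)) /=.
by apply: eq_bigl => b; rewrite HP.
Qed.

Definition f0 : F -> 'I_n.+2 := fun _ => 0.
Definition fc (c : F) : F -> 'I_n.+2 := fun x => if x == c then ord_max else 0.

Lemma shift0 b : shift f0 b = b.
Proof. by case: b => [[x y] z]; rewrite /shift /f0 /= subr0. Qed.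

Lemma shiftc_out c b : b.1.1 != c -> shift (fc c) b = b.
Proof. by case: b => [[x y] z] /= /negPf H; rewrite /shift /fc /= H subr0. Qed.

Variable U : nat -> B -> B -> C.
Hypothesis HU : forall i, unitary (U i).
Variable b0 : B.

Definition phi t := run U (oracle C f0) b0 t.
Definition psi c t := run U (oracle C (fc c)) b0 t.

Lemma phi_norm t : nrm predT (phi t) = 1.
Proof.
elim: t => [|t IH].
  rewrite /phi /= unitary_nrm // /nrm (bigD1 b0) //= /ket eqxx normr1 expr1n big1 ?addr0 //.
  by move=> b /negPf ->; rewrite normr0 expr0n.
rewrite /phi /= unitary_nrm //.
rewrite (eq_nrm _ (fun b => oracle_apply f0 (phi t) b)).
by rewrite (eq_nrm _ (fun b => congr1 (phi t) (shift0 b))).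
Qed.

Definition d c t := nrm predT (fun b => psi c t b - phi t b).
Definition e c t := nrm predT (fun b => phi t (shift (fc c) b) - phi t b).
Definition E c t := \sum_(i < t) e c i.

Lemma d_step c t : (t.+1)%:R * d c t.+1 <= t.+2%:R * d c t + (t.+1 * t.+2)%:R * e c t.
Proof.
have -> : d c t.+1 = nrm predT (fun b => apply_op (oracle C (fc c)) (psi c t) b -
     apply_op (oracle C f0) (phi t) b).
  rewrite /d; apply: eq_trans (eq_nrm _ (fun b => apply_opB (U t.+1)
     (apply_op (oracle C (fc c)) (psi c t)) (apply_op (oracle C f0) (phi t)) b)) _.
  exact: unitary_nrm.
have -> : nrm predT (fun x => apply_op (oracle C (fc c)) (psi c t) x -
     apply_op (oracle C f0) (phi t) x) =
  nrm predT (fun x => (psi c t (shift (fc c) x) - phi t (shift (fc c) x)) +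
                      (phi t (shift (fc c) x) - phi t x)).
  apply: eq_nrm => x; rewrite !oracle_apply shift0.
  by rewrite addrA subrK.
apply: le_trans (nrmD_ineq _ _ _ _) _.
rewrite (nrm_shift (P:=predT) (f:=fc c) (fun b => psi c t b - phi t b)) //.
Qed.

Lemma d_bound c t : d c t <= (2 * t)%:R * E c t.
Proof.
elim: t => [|t IH].
  rewrite /d /E big_ord0 mulr0 /nrm big1 // => b _.
  by rewrite /psi /phi /= subrr normr0 expr0n.
have e0 : 0 <= e c t by apply: nrm_ge0.
have E0 : 0 <= E c t by apply: sumr_ge0 => i _; apply: nrm_ge0.
have H := d_step c t.
rewrite -(ler_pM2l (ltr0Sn C t)).
apply: le_trans H _.
rewrite /E big_ord_recr /= -/(E c t) mulrA -natrM mulrDr.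
apply: lerD.
  apply: le_trans (ler_wpM2l _ IH) _; first by apply: ler0n.
  rewrite mulrA -natrM; apply: ler_wpM2r => //; rewrite ler_nat.
  nia.
apply: ler_wpM2r => //; rewrite ler_nat; nia.
Qed.


Lemma sum_nrmc (v : B -> C) : \sum_c nrm (fun b : B => b.1.1 == c) v = nrm predT v.
Proof.
rewrite /nrm [RHS](partition_big (fun b : B => b.1.1) predT) //.
Qed.

Lemma e_le c t : e c t <= 4%:R * nrm (fun b : B => b.1.1 == c) (phi t).
Proof.
rewrite /e /nrm (bigID (fun b : B => b.1.1 == c)) /= [X in _ + X]big1; last first.
  by move=> b Hb; rewrite shiftc_out // subrr normr0 expr0n.
rewrite addr0.
apply: le_trans (ler_sum _ (fun b _ => pt_ineq1 (phi t (shift (fc c) b)) (- phi t b))) _.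
rewrite big_split /= -!mulr_sumr.
under [X in _ + 2%:R * X]eq_bigr => b _ do rewrite normrN.
have := nrm_shift (P := fun b : B => b.1.1 == c) (f := fc c) (phi t).
rewrite /nrm => ->; last by case=> [[x y] z].

by rewrite -mulrDl -natrD.
Qed.

Lemma sum_e t : \sum_c e c t <= 4%:R.
Proof.
apply: le_trans (ler_sum _ (fun c _ => e_le c t)) _.
by rewrite -mulr_sumr sum_nrmc phi_norm mulr1.
Qed.

Lemma sum_d T : \sum_c d c T <= (8 * T * T)%:R.
Proof.
apply: le_trans (ler_sum _ (fun c _ => d_bound c T)) _.
rewrite -mulr_sumr /E exchange_big /=.
have : \sum_(i < T) \sum_c e c i <= \sum_(i < T) (4%:R : C).
  by apply: ler_sum => i _; apply: sum_e.
rewrite sumr_const card_ord => H.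
apply: le_trans (ler_wpM2l (ler0n _ _) H) _.

by rewrite -mulrnA -natrM ler_nat; nia.
Qed.

End Main.

Section Orb.
Variable F : finFieldType.

Lemma orbit_c (c : F) : orbit_of (Hc c) c = [set c].
Proof.
apply/setP => y; rewrite in_set1; apply/imsetP/eqP.
  by case=> p /imsetP [a _ ->] ->; rewrite /aff_act /=; ring.
move=> ->; exists ((1 - 1) * c, 1).
  by apply/imsetP; exists 1 => //; rewrite inE oner_neq0.
by rewrite /aff_act /=; ring.
Qed.

Lemma orbit_x (c x : F) : x != c -> orbit_of (Hc c) x = [set~ c].
Proof.
move=> xc; apply/setP => y; rewrite !inE; apply/imsetP/idP.
  case=> p /imsetP [a]; rewrite inE => a0 -> ->; rewrite /aff_act /=.
  apply/negP => /eqP H.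
  have : a * (x - c) = (a * x + (1 - a) * c) - c by ring.
  rewrite H subrr => /eqP.
  by rewrite mulf_eq0 (negPf a0) subr_eq0 (negPf xc).
move=> yc; have xc0 : x - c != 0 by rewrite subr_eq0.
set a := (y - c) / (x - c).
have a0 : a != 0 by rewrite mulf_neq0 ?invr_neq0 // subr_eq0.
exists ((1 - a) * c, a); first by apply/imsetP; exists a; rewrite // inE.
rewrite /aff_act /=.
have -> : a * x + (1 - a) * c = a * (x - c) + c by ring.
by rewrite divfK // subrK.
Qed.

Lemma hides_fc n (c : F) : hides (fc n c) (Hc c).
Proof.
move=> x y; rewrite /fc.
case: (eqVneq x c) => [->|xc]; case: (eqVneq y c) => [->|yc] //.
- by rewrite eq_refl; apply/esym/eqP.
- rewrite orbit_c (orbit_x yc); transitivity false; first by apply/negbTE.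
  apply/esym/negbTE; apply/eqP => /setP /(_ c).
  by rewrite !inE eqxx.
- rewrite orbit_c (orbit_x xc); transitivity false; first by apply/negbTE; rewrite eq_sym.
  apply/esym/negbTE; rewrite eq_sym; apply/eqP => /setP /(_ c).
  by rewrite !inE eqxx.
- by rewrite (orbit_x xc) (orbit_x yc) !eqxx.
Qed.

Lemma Hc_inj (c c' : F) : (2 < #|F|)%N -> Hc c = Hc c' -> c = c'.
Proof.
move=> F3 E.
have [a /andP [a0 a1]] : exists a : F, (a != 0) && (a != 1).
  case: (pickP (fun a : F => (a != 0) && (a != 1))) => [a Ha|H]; first by exists a.
  have sub : [set: F] \subset [set 0; 1].
    apply/subsetP => a _; have := H a; rewrite !inE.
    by case: (eqVneq a 0) => //= _ /negbFE.
  move/subset_leq_card: sub; rewrite cardsT cards2.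
  by case: (_ != _) => /= H2; move: (leq_trans F3 H2).
have : ((1 - a) * c, a) \in Hc c' by rewrite -E; apply/imsetP; exists a; rewrite ?inE.
case/imsetP => a' _ [E1 E2]; rewrite -E2 in E1.
apply: (mulfI _ E1); by rewrite subr_eq0 eq_sym.
Qed.
End Orb.

Section Final.
Variable C : numClosedFieldType.
Variable F : finFieldType.
Variables n w : nat.
Local Notation B := (basisT F n.+2 w).
Variable U : nat -> B -> B -> C.
Hypothesis HU : forall i, unitary (U i).
Variable b0 : B.
Variable out : B -> {set F * F}.

Lemma sum_q T : (2 < #|F|)%N ->
  \sum_c nrm (fun b : B => out b == Hc c) (phi U b0 T) <= 1.
Proof.
move=> F3; rewrite /nrm (exchange_big_dep predT) //=.
rewrite -(phi_norm HU b0 T) /nrm; apply: ler_sum => b _.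
set x := `|_| ^+ 2.
have x0 : 0 <= x by apply: exprn_ge0.
case: (pickP (fun c => out b == Hc c)) => [c0 Hc0 | H0].
  rewrite (bigD1 c0) //= big1 ?addr0 // => c /andP [Hc Hne]; exfalso.
  move/eqP: Hne; apply; apply: (Hc_inj F3); by rewrite -(eqP Hc0) -(eqP Hc).
by rewrite big_pred0.
Qed.

Lemma final T : (2 < #|F|)%N ->
  (forall c, 2%:R / 3%:R <= success_prob T U b0 out (fc n c) (Hc c)) ->
  (2 * #|F| <= 48 * T * T + 6)%N.
Proof.
move=> F3 Hs.
have key c : 2%:R <= 3%:R * (2%:R * d U b0 c T + 2%:R * nrm (fun b : B => out b == Hc c) (phi U b0 T)) :> C.
  have := Hs c; rewrite ler_pdivrMr ?ltr0n // mulrC => H; apply: le_trans H _.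
  rewrite ler_wpM2l ?ler0n //.
  have -> : success_prob T U b0 out (fc n c) (Hc c) = nrm (fun b : B => out b == Hc c)
     (fun b => (psi U b0 c T b - phi U b0 T b) + phi U b0 T b).
    by apply: eq_bigr => b _; rewrite subrK.
  have := nrmD_ineq 1 (fun b : B => out b == Hc c) (fun b => psi U b0 c T b - phi U b0 T b)
       (phi U b0 T).
  rewrite mul1r => H; apply: le_trans H _.
  rewrite lerD2r ler_wpM2l ?ler0n //; exact: nrm_subset.
have S : \sum_(c : F) (2%:R : C) <= \sum_(c : F) 3%:R * (2%:R * d U b0 c T + 2%:R * nrm (fun b : B => out b == Hc c) (phi U b0 T)) by apply: ler_sum => c _; exact: key.
rewrite sumr_const -mulr_sumr big_split /= -!mulr_sumr in S.
have D := sum_d HU b0 T; have Q := sum_q T F3.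
have : ((2 * #|F|)%:R : C) <= (3 * (2 * (8 * T * T) + 2 * 1))%:R.
  rewrite [X in _ <= X]natrM natrD [X in _ + X]natrM [X in X + _]natrM.
  rewrite mulrnA.
  apply: le_trans S _.
  rewrite ler_wpM2l ?ler0n // lerD // ler_wpM2l ?ler0n //.
rewrite ler_nat; lia.
Qed.
End Final.

Theorem proposition1 :
  exists k q0 : nat,
  forall (C : numClosedFieldType) (F : finFieldType) (n w T : nat)
         (U : nat -> basisT F n.+2 w -> basisT F n.+2 w -> C)
         (b0 : basisT F n.+2 w) (out : basisT F n.+2 w -> {set F * F}),
    (q0 <= #|F|)%N ->
    (forall i : nat, unitary (U i)) ->
    (forall (c : F) (f : F -> 'I_n.+2), hides f (Hc c) ->
        2%:R / 3%:R <= success_prob T U b0 out f (Hc c)) ->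
    (#|F| <= k * T ^ 2)%N.
Proof.
exists 27%N, 4%N => C F n w T U b0 out Hq HU Hs.
have F3 : (2 < #|F|)%N by apply: leq_trans Hq.
have := @final C F n w U HU b0 out T F3 (fun c => Hs c (fc n c) (hides_fc n c)).
rewrite expnS expn1.
move=> H; clear Hs; case: T H => [|T] H; first by lia.
nia.
Qed.
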